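(* Let $\mathcal{M}$ be a metric space on $\omega$ with completion $\mathcal{C}(\mathcal{M})$, and let $\bar a,\bar b$ be tuples of elements of $\mathcal{C}(\mathcal{M})$ of the same length. For every ordinal $\alpha$ and every $f\in\mathrm{REC}$, if $\bar a\sim_\alpha\bar b$ then $\bar a\sim^f_\alpha\bar b$. Consequently $\mathrm{SR}(\bar a,\bar b)\le \mathrm{R}(\bar a,\bar b)$.
   Context: $\mathcal{C}(\mathcal{M})$ is a structure in the language $\mathscr{U}=\{\dot d_q,\dot d^q:q\in\mathbb{Q}^+\}$, $\dot d_q(x,y)\Leftrightarrow d(x,y)<q$, $\dot d^q(x,y)\Leftrightarrow d(x,y)>q$. Back-and-forth relations in $\mathcal{C}(\mathcal{M})$: $\bar a\sim_0\bar b$ iff $a_i\mapsto b_i$ is a partial $\mathscr{U}$-isomorphism; $\bar a\sim_{\alpha+1}\bar b$ iff for every $a\in\mathcal{C}(\mathcal{M})$ there is $b$ with $\bar a a\sim_\alpha\bar b b$ and conversely; at limits take intersections; $\mathrm{SR}(\bar a,\bar b)$ is the least $\mu$ with $\neg(\bar a\sim_\mu\bar b)$, or $\infty$. $\mathrm{REC}$ is the set of recursive, strictly decreasing $f:\omega\to\mathbb{Q}^+$ converging to $0$. For $f\in\mathrm{REC}$, tuples $\bar a=(a_0,\dots,a_{p-1})$, $\bar b=(b_0,\dots,b_{p-1})$ from $\mathcal{C}(\mathcal{M})$ and an ordinal $\alpha$, the game $G^{f,\bar a,\bar b}_\alpha$ is played as follows: at move $i=0,1,2,\dots$, Player 1 plays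 an ordinal $\alpha_i$ with $\alpha_0<\alpha$ and $\alpha_i<\alpha_{i-1}$ for $i>0$, together with an element of $\mathcal{M}$ (i.e. a natural number): if $i$ is even Player 1 plays $c_i\in\mathcal{M}$ and Player 2 responds with $d_i\in\mathcal{M}$; if $i$ is odd Player 1 plays $d_i\in\mathcal{M}$ and Player 2 responds with $c_i\in\mathcal{M}$. The game ends after Player 2 responds to the move at which Player 1 plays $\alpha_{k-1}=0$. Player 2 wins iff (I) for all $i<p$, $j<k$: $|d(a_i,c_j)-d(b_i,d_j)|<f(j)$, and (II) for all $i,j<k$: $|d(c_i,c_j)-d(d_i,d_j)|<f(i)+f(j)$, distances computed in $\mathcal{C}(\mathcal{M})$. $\bar a\sim^f_\alpha\bar b$ means Player 2 has a winning strategy in $G^{f,\bar a,\bar b}_\alpha$. $\mathrm{R}(\bar a,\bar b)$ is the least ordinal $\mu$ such that $\neg(\bar a\sim^f_\mu\bar b)$ for some $f\in\mathrm{REC}$, or $\infty$ if there is none. *)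

(* Defs.v *)
From Stdlib Require Import Reals QArith Qabs Qreals List.
Import ListNotations.
Set Implicit Arguments.

Inductive rcode : Type :=
| RZero | RSucc | RProj (i : nat) | RComp (h : rcode) (gs : list rcode)
| RPrec (g h : rcode) | RMu (g : rcode).

Inductive reval : rcode -> list nat -> nat -> Prop :=
| re_zero xs : reval RZero xs 0
| re_succ x xs : reval RSucc (x :: xs) (S x)
| re_proj i xs : (i < length xs)%nat -> reval (RProj i) xs (nth i xs 0%nat)
| re_comp h gs xs ys y : revals gs xs ys -> reval h ys y -> reval (RComp h gs) xs y
| re_prec0 g h xs y : reval g xs y -> reval (RPrec g h) (0%nat :: xs) y
| re_precS g h n xs r y : reval (RPrec g h) (n :: xs) r ->
    reval h (n :: r :: xs) y -> reval (RPrec g h) (S n :: xs) y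
| re_mu g xs n : reval g (n :: xs) 0%nat ->
    (forall m, (m < n)%nat -> exists k, reval g (m :: xs) (S k)) -> reval (RMu g) xs n
with revals : list rcode -> list nat -> list nat -> Prop :=
| res_nil xs : revals nil xs nil
| res_cons g gs xs y ys : reval g xs y -> revals gs xs ys -> revals (g :: gs) xs (y :: ys).

Definition recursive_nat (g : nat -> nat) : Prop :=
  exists c, forall n, reval c [n] (g n).

Definition recursive_Q (f : nat -> Q) : Prop :=
  exists g1 g2, recursive_nat g1 /\ recursive_nat g2 /\
    forall n, (f n == Z.of_nat (g1 n) # Pos.of_succ_nat (g2 n))%Q.

Definition REC (f : nat -> Q) : Prop :=
  recursive_Q f /\
  (forall n, 0 < f n)%Q /\
  (forall m n, (m < n)%nat -> (f n < f m)%Q) /\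
  (forall eps, (0 < eps)%Q -> exists N, forall n, (N <= n)%nat -> (Qabs (f n) < eps)%Q).

Definition is_metric (X : Type) (dist : X -> X -> R) : Prop :=
  (forall x y, 0 <= dist x y)%R /\ (forall x y, dist x y = 0%R <-> x = y) /\
  (forall x y, dist x y = dist y x) /\
  (forall x y z, dist x z <= dist x y + dist y z)%R.

Definition cauchy_seq (X : Type) (dist : X -> X -> R) (u : nat -> X) : Prop :=
  forall eps, (0 < eps)%R -> exists N, forall m n, (N <= m)%nat -> (N <= n)%nat ->
    (dist (u m) (u n) < eps)%R.

Definition converges_to (X : Type) (dist : X -> X -> R) (u : nat -> X) (l : X) : Prop :=
  forall eps, (0 < eps)%R -> exists N, forall n, (N <= n)%nat -> (dist (u n) l < eps)%R.

Definition is_completion (d : nat -> nat -> R) (C : Type) (dC : C -> C -> R) (e : nat -> C) : Prop :=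
  is_metric dC /\
  (forall x y, dC (e x) (e y) = d x y) /\
  (forall x eps, (0 < eps)%R -> exists n, (dC x (e n) < eps)%R) /\
  (forall u, cauchy_seq dC u -> exists l, converges_to dC u l).

(* Ordinals: represented inside an arbitrary strict well-order (O, lt). *)
Definition strict_total_order (O : Type) (lt : O -> O -> Prop) : Prop :=
  (forall x y z, lt x y -> lt y z -> lt x z) /\
  (forall x, ~ lt x x) /\
  (forall x y, lt x y \/ x = y \/ lt y x).

Definition is_zero (O : Type) (lt : O -> O -> Prop) (g : O) : Prop := forall b, ~ lt b g.

Section BF.
Variables (C : Type) (dC : C -> C -> R).

(* a_i |-> b_i is a partial U-isomorphism, U = {d_q, d^q : q in Q^+} *)
Definition partial_iso (a b : list C) : Prop :=
  length a = length b /\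
  forall i j ai aj bi bj, nth_error a i = Some ai -> nth_error a j = Some aj ->
    nth_error b i = Some bi -> nth_error b j = Some bj ->
    (ai = aj <-> bi = bj) /\
    forall q : Q, (0 < q)%Q ->
      ((dC ai aj < Q2R q)%R <-> (dC bi bj < Q2R q)%R) /\
      ((dC ai aj > Q2R q)%R <-> (dC bi bj > Q2R q)%R).

Definition back_forth (S : list C -> list C -> Prop) (a b : list C) : Prop :=
  (forall c, exists d, S (a ++ [c]) (b ++ [d])) /\
  (forall d, exists c, S (a ++ [c]) (b ++ [d])).

Variables (O : Type) (lt : O -> O -> Prop).

Definition bf_step (al : O) (rec : forall be, lt be al -> list C -> list C -> Prop)
  (a b : list C) : Prop :=
  (* al = 0 *)
  ((forall be, ~ lt be al) -> partial_iso a b) /\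
  (* al = be + 1 *)
  (forall be (h : lt be al), (forall g, lt g al -> ~ lt be g) -> back_forth (rec be h) a b) /\
  (* al limit *)
  ((exists be, lt be al) -> (forall be, lt be al -> exists g, lt be g /\ lt g al) ->
     forall be (h : lt be al), rec be h a b).

Definition bf_rel (wf : well_founded lt) : O -> list C -> list C -> Prop :=
  Fix wf (fun _ => list C -> list C -> Prop) bf_step.

(* The game G^{f,a,b}_al.  Player 1's moves are pairs (al_i, x_i) with
   x_i in M = omega; a strategy of Player 2 maps the previous moves of
   Player 1 and the current move to the response. *)
Variables (e : nat -> C).

Definition complete_play (al : O) (ms : list (O * nat)) : Prop :=
  ms <> nil /\
  (forall g, hd_error (map fst ms) = Some g -> lt g al) /\
  (forall i g g', nth_error (map fst ms) i = Some g ->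
     nth_error (map fst ms) (S i) = Some g' -> lt g' g) /\
  (forall g, nth_error (map fst ms) (length ms - 1) = Some g -> is_zero lt g).

(* the pairs (c_i, d_i) produced when Player 2 follows sigma *)
Fixpoint cd_aux (sigma : list (O * nat) -> O * nat -> nat)
  (pre rest : list (O * nat)) (i : nat) : list (nat * nat) :=
  match rest with
  | nil => nil
  | m :: rest' =>
      let y := sigma pre m in
      (if Nat.even i then (snd m, y) else (y, snd m))
        :: cd_aux sigma (pre ++ [m]) rest' (S i)
  end.

Definition cd_of sigma ms := cd_aux sigma nil ms 0.

Definition p2_wins (f : nat -> Q) (a b : list C) (cds : list (nat * nat)) : Prop :=
  (forall i j ai bi c d, nth_error a i = Some ai -> nth_error b i = Some bi ->
     nth_error cds j = Some (c, d) ->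
     (Rabs (dC ai (e c) - dC bi (e d)) < Q2R (f j))%R) /\
  (forall i j ci di cj dj, nth_error cds i = Some (ci, di) ->
     nth_error cds j = Some (cj, dj) ->
     (Rabs (dC (e ci) (e cj) - dC (e di) (e dj)) < Q2R (f i) + Q2R (f j))%R).

Definition sim_f (f : nat -> Q) (al : O) (a b : list C) : Prop :=
  exists sigma : list (O * nat) -> O * nat -> nat,
    forall ms, complete_play al ms -> p2_wins f a b (cd_of sigma ms).

End BF.

(* least element satisfying P, or None (= infinity) if there is none *)
Definition least_opt (O : Type) (lt : O -> O -> Prop) (P : O -> Prop) (m : option O) : Prop :=
  match m with
  | Some mu => P mu /\ forall nu, P nu -> ~ lt nu mu
  | None => forall mu, ~ P mu
  end.

Definition ole_opt (O : Type) (lt : O -> O -> Prop) (m1 m2 : option O) : Prop :=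
  match m1, m2 with
  | _, None => True
  | None, Some _ => False
  | Some x, Some y => ~ lt y x
  end.

Definition SR_is C dC O lt (wf : well_founded lt) (a b : list C) (m : option O) : Prop :=
  least_opt lt (fun mu => ~ @bf_rel C dC O lt wf mu a b) m.

Definition R_is C dC (e : nat -> C) O lt (a b : list C) (m : option O) : Prop :=
  least_opt lt (fun mu => exists f, REC f /\ ~ @sim_f C dC O lt e f mu a b) m.

(* Main.v *)
Require Import Defs.
From Stdlib Require Import Reals QArith Qreals List Lra Lia Classical ClassicalEpsilon FunctionalExtensionality.
Import ListNotations.
Open Scope R_scope.

Lemma rat_between (x y : R) : x < y -> exists q : Q, x < Q2R q < y.
Proof.
  intros Hxy.
  destruct (archimed (/ (y - x))) as [Hn1 _].
  set (n := up (/ (y - x))) in *.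
  assert (Hp : 0 < / (y - x)) by (apply Rinv_0_lt_compat; lra).
  assert (HN : 0 < IZR n) by lra.
  assert (Hn0 : (0 < n)%Z) by (apply lt_0_IZR; exact HN).
  destruct (archimed (x * IZR n)) as [Hk1 Hk2].
  set (k := up (x * IZR n)) in *.
  exists (k # Z.to_pos n).
  unfold Q2R; simpl. rewrite Z2Pos.id by exact Hn0.
  assert (H1 : IZR n * (y - x) > 1).
  { apply Rmult_lt_reg_r with (/ (y - x)); [exact Hp|].
    rewrite Rmult_assoc, Rinv_r by lra. lra. }
  split.
  - apply Rmult_lt_reg_r with (IZR n); [exact HN|].
    rewrite Rmult_assoc, Rinv_l by lra. lra.
  - apply Rmult_lt_reg_r with (IZR n); [exact HN|].
    rewrite Rmult_assoc, Rinv_l by lra. nra.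
Qed.

Lemma Q2R_pos (q : Q) : (0 < q)%Q -> 0 < Q2R q.
Proof. intro H. apply Qlt_Rlt in H. unfold Q2R in H at 1. simpl in H. lra. Qed.

Lemma dist_eq_of (x y : R) : 0 <= x -> 0 <= y ->
  (forall q : Q, (0 < q)%Q -> (x < Q2R q <-> y < Q2R q)) -> x = y.
Proof.
  intros Hx Hy H.
  destruct (Rtotal_order x y) as [Hl|[He|Hl]]; auto.
  - destruct (rat_between x y Hl) as [q [H1 H2]].
    assert (0 < q)%Q by (apply Rlt_Qlt; unfold Q2R at 1; simpl; lra).
    apply H in H1; auto. lra.
  - destruct (rat_between y x Hl) as [q [H1 H2]].
    assert (0 < q)%Q by (apply Rlt_Qlt; unfold Q2R at 1; simpl; lra).
    apply H in H1; auto. lra.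
Qed.

Lemma bf_unfold {C} (dC : C -> C -> R) {O} {lt : O -> O -> Prop} (wf : well_founded lt) {al} A B :
  bf_rel dC wf al A B <-> bf_step dC lt al (fun be _ => bf_rel dC wf be) A B.
Proof.
  unfold bf_rel at 1. rewrite Fix_eq. reflexivity.
  intros x f g Hfg.
  assert (E : f = g).
  { apply functional_extensionality_dep; intro y.
    apply functional_extensionality_dep; intro p. apply Hfg. }
  subst; reflexivity.
Qed.



Lemma classify {O} (lt : O -> O -> Prop) (Hto : strict_total_order lt) al :
  is_zero lt al \/ (exists be, lt be al /\ forall g, lt g al -> ~ lt be g) \/
  ((exists be, lt be al) /\ forall be, lt be al -> exists g, lt be g /\ lt g al).
Proof.
  destruct (classic (is_zero lt al)) as [Hz|Hz]; [left; auto|right].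
  assert (Hex : exists be, lt be al).
  { apply NNPP; intro N; apply Hz; intros b Hb; apply N; eauto. }
  destruct (classic (forall be, lt be al -> exists g, lt be g /\ lt g al)) as [L|L].
  - right; auto.
  - left. apply not_all_ex_not in L as [be L].
    exists be. apply imply_to_and in L as [H1 H2]. split; auto.
    intros g Hg Hb; apply H2; eauto.
Qed.

Lemma bf_zero {C} (dC : C -> C -> R) {O} {lt : O -> O -> Prop} (wf : well_founded lt) {al} A B :
  is_zero lt al -> (bf_rel dC wf al A B <-> partial_iso dC A B).
Proof.
  intros Hz. rewrite bf_unfold. unfold bf_step. split.
  - intros [H _]; apply H; exact Hz.
  - intros H; split; [auto|split].
    + intros be h; exfalso; exact (Hz be h).
    + intros [be h]; exfalso; exact (Hz be h).
Qed.

Lemma bf_succ {C} (dC : C -> C -> R) {O} {lt : O -> O -> Prop} (wf : well_founded lt)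
  (Hto : strict_total_order lt) {al be} A B :
  lt be al -> (forall g, lt g al -> ~ lt be g) ->
  (bf_rel dC wf al A B <-> back_forth (bf_rel dC wf be) A B).
Proof.
  destruct Hto as [Htr [Hirr Htot]].
  intros Hb Hs. rewrite bf_unfold. unfold bf_step. split.
  - intros [_ [H _]]. exact (H be Hb Hs).
  - intros H; split; [|split].
    + intros Hz; exfalso; exact (Hz be Hb).
    + intros be' h' Hs'.
      destruct (Htot be be') as [L|[E|L]].
      * exfalso; exact (Hs be' h' L).
      * subst; exact H.
      * exfalso; exact (Hs' be Hb L).
    + intros _ Hl. exfalso. destruct (Hl be Hb) as [g [G1 G2]]. exact (Hs g G2 G1).
Qed.

Lemma bf_limit {C} (dC : C -> C -> R) {O} {lt : O -> O -> Prop} (wf : well_founded lt) {al} A B :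
  (exists be, lt be al) -> (forall be, lt be al -> exists g, lt be g /\ lt g al) ->
  (bf_rel dC wf al A B <-> forall be, lt be al -> bf_rel dC wf be A B).
Proof.
  intros He Hl. rewrite bf_unfold. unfold bf_step. split.
  - intros [_ [_ H]]. exact (H He Hl).
  - intros H; split; [|split].
    + intros Hz; exfalso; destruct He as [b Hb]; exact (Hz b Hb).
    + intros be h Hs. exfalso. destruct (Hl be h) as [g [G1 G2]]. exact (Hs g G2 G1).
    + intros _ _ be h; apply H; exact h.
Qed.

Lemma nth_app_l {T} (l l' : list T) i x : nth_error l i = Some x -> nth_error (l ++ l') i = Some x.
Proof.
  intro H. rewrite nth_error_app1; auto. apply nth_error_Some. congruence.
Qed.

Lemma pi_restrict {C} (dC : C -> C -> R) A B c d :
  partial_iso dC (A ++ [c]) (B ++ [d]) -> partial_iso dC A B.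
Proof.
  intros [Hl H]. rewrite !length_app in Hl; simpl in Hl.
  split; [lia|].
  intros i j ai aj bi bj H1 H2 H3 H4.
  eapply H; apply nth_app_l; eassumption.
Qed.

Lemma wf_min {O} {lt : O -> O -> Prop} (wf : well_founded lt) (P : O -> Prop) x :
  P x -> exists m, P m /\ forall y, lt y m -> ~ P y.
Proof.
  revert x. apply (well_founded_ind wf (fun x => P x -> exists m, P m /\ forall y, lt y m -> ~ P y)).
  intros x IH Px.
  destruct (classic (exists y, lt y x /\ P y)) as [[y [Hy Py]]|N].
  - exact (IH y Hy Py).
  - exists x; split; auto. intros y Hy Py; apply N; eauto.
Qed.

Lemma bf_mono {C} (dC : C -> C -> R) (c0 : C) {O} {lt : O -> O -> Prop} (wf : well_founded lt)
  (Hto : strict_total_order lt) :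
  forall al be, lt be al -> forall A B, bf_rel dC wf al A B -> bf_rel dC wf be A B.
Proof.
  pose proof Hto as [Htr [Hirr Htot]].
  intro al. induction al as [al IHo] using (well_founded_ind wf).
  intros be. induction be as [be IHi] using (well_founded_ind wf).
  intros Hba A B Hal.
  destruct (classify lt Hto al) as [Z|[[g [Hg Hs]]|[He Hl]]].
  - exfalso; exact (Z be Hba).
  - rewrite (bf_succ dC wf Hto A B Hg Hs) in Hal.
    (* be <= g *)
    assert (Hle : forall X Y, bf_rel dC wf g X Y -> bf_rel dC wf be X Y).
    { intros X Y HX. destruct (Htot be g) as [L|[E|L]].
      - exact (IHo g Hg be L X Y HX).
      - subst; exact HX.
      - exfalso; exact (Hs be Hba L). }
    destruct (classify lt Hto be) as [Zb|[[d [Hd Hsd]]|[Heb Hlb]]].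
    + rewrite (bf_zero dC wf A B Zb).
      destruct Hal as [Hf _]. destruct (Hf c0) as [d Hd].
      apply Hle in Hd. rewrite (bf_zero dC wf _ _ Zb) in Hd.
      exact (pi_restrict dC _ _ _ _ Hd).
    + rewrite (bf_succ dC wf Hto A B Hd Hsd).
      assert (Hdg : lt d g).
      { destruct (Htot be g) as [L|[E|L]].
        - exact (Htr _ _ _ Hd L).
        - subst; exact Hd.
        - exfalso; exact (Hs be Hba L). }
      destruct Hal as [Hf Hb]. split.
      * intro c. destruct (Hf c) as [x Hx]. exists x. exact (IHo g Hg d Hdg _ _ Hx).
      * intro x. destruct (Hb x) as [c Hc]. exists c. exact (IHo g Hg d Hdg _ _ Hc).
    + rewrite (bf_limit dC wf A B Heb Hlb).
      intros d Hd. apply (IHi d Hd (Htr _ _ _ Hd Hba)).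
      rewrite (bf_succ dC wf Hto A B Hg Hs). exact Hal.
  - rewrite (bf_limit dC wf A B He Hl) in Hal. exact (Hal be Hba).
Qed.

Lemma bf_ext {C} (dC : C -> C -> R) (c0 : C) {O} {lt : O -> O -> Prop} (wf : well_founded lt)
  (Hto : strict_total_order lt) ga be A B :
  bf_rel dC wf ga A B -> lt be ga -> back_forth (bf_rel dC wf be) A B.
Proof.
  pose proof Hto as [Htr [Hirr Htot]].
  intros H Hb.
  destruct (wf_min wf (fun s => lt be s) ga Hb) as [s [Hs Hmin]].
  assert (Hss : forall g, lt g s -> ~ lt be g) by (intros g Hg L; exact (Hmin g Hg L)).
  rewrite <- (bf_succ dC wf Hto A B Hs Hss).
  destruct (Htot s ga) as [L|[E|L]].
  - exact (bf_mono dC c0 wf Hto ga s L A B H).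
  - subst; exact H.
  - exfalso; exact (Hmin ga L Hb).
Qed.

Definition chd {C} (dC : C -> C -> R) {O} {lt : O -> O -> Prop} (wf : well_founded lt) (c0 : C)
  be A B c : C := epsilon (inhabits c0) (fun d => bf_rel dC wf be (A ++ [c]) (B ++ [d])).
Definition chc {C} (dC : C -> C -> R) {O} {lt : O -> O -> Prop} (wf : well_founded lt) (c0 : C)
  be A B d : C := epsilon (inhabits c0) (fun c => bf_rel dC wf be (A ++ [c]) (B ++ [d])).
Definition appr {C} (dC : C -> C -> R) (e : nat -> C) x (q : Q) : nat :=
  epsilon (inhabits 0%nat) (fun n => (dC x (e n) < Q2R q)%R).

Definition stp {C} (dC : C -> C -> R) (e : nat -> C) {O} {lt : O -> O -> Prop} (wf : well_founded lt)
  (f : nat -> Q) (i : nat) (s : list C * list C) (m : O * nat) : nat * (list C * list C) :=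
  let (be, x) := m in let (A, B) := s in
  if Nat.even i then let ds := chd dC wf (e 0%nat) be A B (e x) in (appr dC e ds (f i), (A ++ [e x], B ++ [ds]))
  else let cs := chc dC wf (e 0%nat) be A B (e x) in (appr dC e cs (f i), (A ++ [cs], B ++ [e x])).

Fixpoint run {C} (dC : C -> C -> R) (e : nat -> C) {O} {lt : O -> O -> Prop} (wf : well_founded lt)
  (f : nat -> Q) (s : list C * list C) (i : nat) (ms : list (O * nat)) : list C * list C :=
  match ms with
  | nil => s
  | m :: r => run dC e wf f (snd (stp dC e wf f i s m)) (S i) r
  end.

Definition strat {C} (dC : C -> C -> R) (e : nat -> C) {O} {lt : O -> O -> Prop} (wf : well_founded lt)
  (f : nat -> Q) (a b : list C) (pre : list (O * nat)) (m : O * nat) : nat :=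
  fst (stp dC e wf f (length pre) (run dC e wf f (a, b) 0 pre) m).

Lemma run_app {C} (dC : C -> C -> R) (e : nat -> C) {O} {lt : O -> O -> Prop} (wf : well_founded lt)
  f pre : forall s i m, run dC e wf f s i (pre ++ [m]) = snd (stp dC e wf f (i + length pre) (run dC e wf f s i pre) m).
Proof.
  induction pre as [|p pre IH]; intros s i m; simpl.
  - rewrite Nat.add_0_r; reflexivity.
  - rewrite IH. f_equal. f_equal. lia.
Qed.

Lemma appr_spec {C} (dC : C -> C -> R) (e : nat -> C)
  (Hd : forall x eps, (0 < eps)%R -> exists n, (dC x (e n) < eps)%R) x q :
  (0 < q)%Q -> (dC x (e (appr dC e x q)) < Q2R q)%R.
Proof.
  intro Hq. unfold appr. apply epsilon_spec. apply Hd. apply Q2R_pos; exact Hq.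
Qed.

Lemma trace {C} (dC : C -> C -> R) (e : nat -> C) {O} {lt : O -> O -> Prop} (wf : well_founded lt)
  (Hd : forall x eps, (0 < eps)%R -> exists n, (dC x (e n) < eps)%R)
  (H0 : forall x, dC x x = 0%R)
  f (Hf : forall n, (0 < f n)%Q) a b rest :
  forall pre, let s := run dC e wf f (a, b) 0 pre in
  exists CS DS, run dC e wf f s (length pre) rest = (fst s ++ CS, snd s ++ DS) /\
    length CS = length rest /\ length DS = length rest /\
    forall j c d, nth_error (cd_aux (strat dC e wf f a b) pre rest (length pre)) j = Some (c, d) ->
      exists cs ds, nth_error CS j = Some cs /\ nth_error DS j = Some ds /\
        (dC cs (e c) + dC ds (e d) < Q2R (f (length pre + j)%nat))%R.
Proof.
  induction rest as [|m rest IH]; intros pre s.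
  - exists nil, nil. simpl. destruct s; simpl. rewrite !app_nil_r. repeat split; auto.
    intros j c d Hj. destruct j; discriminate.
  - destruct (IH (pre ++ [m])) as [CS [DS [Hr [L1 [L2 Hj]]]]].
    rewrite run_app in Hr. simpl in Hr. unfold s in *; clear s.
    rewrite length_app in Hj, Hr. simpl in Hj, Hr. rewrite Nat.add_1_r in Hj, Hr.
    unfold strat in *. simpl.
    destruct (run dC e wf f (a, b) 0 pre) as [A B] eqn:Es. destruct m as [be x].
    unfold stp in Hr |- *. simpl.
    destruct (Nat.even (length pre)) eqn:Ev; simpl in Hr |- *.
    + exists (e x :: CS), (chd dC wf (e 0%nat) be A B (e x) :: DS).
      rewrite Hr, <- !app_assoc. simpl. repeat split; try (simpl; lia).
      intros j c d Hn. destruct j as [|j]; simpl in Hn.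
      * injection Hn as <- <-. do 2 eexists; split; [reflexivity|split; [reflexivity|]].
        rewrite H0, Rplus_0_l, Nat.add_0_r. apply appr_spec; auto.
      * 
        destruct (Hj j c d) as [cs [ds [X1 [X2 X3]]]].
        { rewrite <- Hn. f_equal. }
        exists cs, ds. simpl. repeat split; auto. replace (length pre + S j)%nat with (S (length pre + j))%nat by lia. exact X3.
    + exists (chc dC wf (e 0%nat) be A B (e x) :: CS), (e x :: DS).
      rewrite Hr, <- !app_assoc. simpl. repeat split; try (simpl; lia).
      intros j c d Hn. destruct j as [|j]; simpl in Hn.
      * injection Hn as <- <-. do 2 eexists; split; [reflexivity|split; [reflexivity|]].
        rewrite H0, Rplus_0_r, Nat.add_0_r. apply appr_spec; auto.
      * 
        destruct (Hj j c d) as [cs [ds [X1 [X2 X3]]]].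
        { rewrite <- Hn. f_equal. }
        exists cs, ds. simpl. repeat split; auto. replace (length pre + S j)%nat with (S (length pre + j))%nat by lia. exact X3.
Qed.

Fixpoint chain {O} (lt : O -> O -> Prop) (g : O) (ms : list (O * nat)) : Prop :=
  match ms with
  | nil => False
  | m :: r => lt (fst m) g /\ match r with nil => is_zero lt (fst m) | _ => chain lt (fst m) r end
  end.

Lemma cp_chain {O} (lt : O -> O -> Prop) ms : forall al, complete_play lt al ms -> chain lt al ms.
Proof.
  induction ms as [|m r IH]; intros al [Hne [Hhd [Hdec Hlast]]].
  - exfalso; apply Hne; reflexivity.
  - simpl. split.
    + apply Hhd. reflexivity.
    + destruct r as [|m' r'].
      * apply Hlast. reflexivity.
      * apply IH. split; [discriminate|split; [|split]].
        -- intros g Hg. simpl in Hg. injection Hg as <-. apply (Hdec 0%nat); reflexivity.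
        -- intros i g g' H1 H2. apply (Hdec (S i)); assumption.
        -- intros g Hg. apply Hlast. simpl in Hg |- *. rewrite Nat.sub_0_r in Hg. exact Hg.
Qed.

Lemma run_pi {C} (dC : C -> C -> R) (e : nat -> C) {O} {lt : O -> O -> Prop} (wf : well_founded lt)
  (Hto : strict_total_order lt) f rest :
  forall s i g, bf_rel dC wf g (fst s) (snd s) -> chain lt g rest ->
  partial_iso dC (fst (run dC e wf f s i rest)) (snd (run dC e wf f s i rest)).
Proof.
  induction rest as [|[be x] r IH]; intros [A B] i g Hb Hc; [destruct Hc|].
  destruct Hc as [Hlt Hr]. simpl in Hb, Hlt, Hr.
  pose proof (bf_ext dC (e 0%nat) wf Hto g be A B Hb Hlt) as [Hf Hbk].
  assert (Hn : bf_rel dC wf be (fst (snd (stp dC e wf f i (A, B) (be, x))))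
                                (snd (snd (stp dC e wf f i (A, B) (be, x))))).
  { unfold stp. destruct (Nat.even i); simpl.
    - unfold chd. apply epsilon_spec. apply Hf.
    - unfold chc. apply epsilon_spec. apply Hbk. }
  simpl. destruct r as [|m' r'].
  - simpl. rewrite (bf_zero dC wf _ _ Hr) in Hn. exact Hn.
  - apply (IH _ _ be Hn Hr).
Qed.

Lemma pi_dist {C} (dC : C -> C -> R) (Hnn : forall x y, (0 <= dC x y)%R) X Y i j x1 x2 y1 y2 :
  partial_iso dC X Y -> nth_error X i = Some x1 -> nth_error X j = Some x2 ->
  nth_error Y i = Some y1 -> nth_error Y j = Some y2 -> dC x1 x2 = dC y1 y2.
Proof.
  intros [_ H] H1 H2 H3 H4. apply dist_eq_of; auto.
  intros q Hq. exact (proj1 (proj2 (H i j x1 x2 y1 y2 H1 H2 H3 H4) q Hq)).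
Qed.

Lemma nth_app_r {T} (l l' : list T) j : nth_error (l ++ l') (length l + j) = nth_error l' j.
Proof. rewrite nth_error_app2 by lia. f_equal. lia. Qed.

Theorem fact4p3
  (d : nat -> nat -> R) (HM : is_metric d)
  (C : Type) (dC : C -> C -> R) (e : nat -> C) (HC : is_completion d dC e)
  (a b : list C) (Hab : length a = length b)
  (O : Type) (lt : O -> O -> Prop) (wf : well_founded lt) (Hto : strict_total_order lt) :
  (forall (al : O) (f : nat -> Q), REC f ->
     bf_rel dC wf al a b -> sim_f dC lt e f al a b) /\
  (forall m1 m2 : option O, SR_is dC wf a b m1 -> R_is dC e lt a b m2 -> ole_opt lt m1 m2).
Proof.
  destruct HC as [[Hnn [Hz [Hsym Htri]]] [_ [Hden _]]].
  assert (H0 : forall x, dC x x = 0%R) by (intro x; apply Hz; reflexivity).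
  assert (P1 : forall (al : O) (f : nat -> Q), REC f ->
     bf_rel dC wf al a b -> sim_f dC lt e f al a b).
  { intros al f [_ [Hf _]] Hb.
    exists (strat dC e wf f a b). intros ms Hcp.
    destruct (trace dC e wf Hden H0 f Hf a b ms nil) as [CS [DS [Hr [L1 [L2 Hj]]]]].
    simpl in Hr. unfold cd_of.
    pose proof (run_pi dC e wf Hto f ms (a, b) 0 al Hb (cp_chain lt ms al Hcp)) as Hpi.
    rewrite Hr in Hpi. simpl in Hpi, Hj.
    split.
    - intros i j ai bi c dd Ha Hbi Hn.
      destruct (Hj j c dd Hn) as [cs [ds [X1 [X2 X3]]]].
      assert (E : dC ai cs = dC bi ds).
      { apply (pi_dist dC Hnn _ _ i (length a + j) ai cs bi ds Hpi).
        - apply nth_app_l; exact Ha.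
        - rewrite nth_app_r; exact X1.
        - apply nth_app_l; exact Hbi.
        - rewrite Hab, nth_app_r; exact X2. }
      pose proof (Htri ai cs (e c)). pose proof (Htri ai (e c) cs).
      pose proof (Htri bi ds (e dd)). pose proof (Htri bi (e dd) ds).
      rewrite (Hsym (e c) cs) in *. rewrite (Hsym (e dd) ds) in *.
      apply Rabs_def1; lra.
    - intros i j ci di cj dj Hi Hjj.
      destruct (Hj i ci di Hi) as [cs1 [ds1 [X1 [X2 X3]]]].
      destruct (Hj j cj dj Hjj) as [cs2 [ds2 [Y1 [Y2 Y3]]]].
      assert (E : dC cs1 cs2 = dC ds1 ds2).
      { apply (pi_dist dC Hnn _ _ (length a + i) (length a + j) cs1 cs2 ds1 ds2 Hpi).
        - rewrite nth_app_r; exact X1.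
        - rewrite nth_app_r; exact Y1.
        - rewrite Hab, nth_app_r; exact X2.
        - rewrite Hab, nth_app_r; exact Y2. }
      pose proof (Htri (e ci) cs1 (e cj)). pose proof (Htri cs1 cs2 (e cj)).
      pose proof (Htri cs1 (e ci) cs2). pose proof (Htri (e ci) (e cj) cs2).
      pose proof (Htri (e di) ds1 (e dj)). pose proof (Htri ds1 ds2 (e dj)).
      pose proof (Htri ds1 (e di) ds2). pose proof (Htri (e di) (e dj) ds2).
      rewrite (Hsym (e ci) cs1), (Hsym (e cj) cs2), (Hsym (e di) ds1), (Hsym (e dj) ds2) in *.
      apply Rabs_def1; lra. }
  split; [exact P1|].
  intros m1 m2 H1 H2. destruct m2 as [y|]; [|destruct m1; exact I].
  destruct H2 as [[f [Hf Hn]] _].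
  assert (Hny : ~ bf_rel dC wf y a b) by (intro Hb; exact (Hn (P1 y f Hf Hb))).
  destruct m1 as [x|]; simpl in *.
  - destruct H1 as [_ Hmin]. exact (Hmin y Hny).
  - exact (H1 y Hny).
Qed.
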